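(* Let $p$ be a complex polynomial with at least two distinct roots and $h\in\mathbb{C}\setminus\{0\}$. If all the finite fixed points of $N_{h,p}$ are superattracting, then all the roots of $p$ have the same multiplicity. Moreover, if $m$ is this common multiplicity, i.e. $p=q^m$ where $q$ is a polynomial with only simple roots, then $N_{h,p}=N_q$, where $N_q(z)=z-\frac{q(z)}{q'(z)}$ is the classical Newton map of $q$.
   Context: The relaxed Newton map is $N_{h,p}(z)=z-h\,\frac{p(z)}{p'(z)}$; its finite fixed points are the roots of $p$. A fixed point is superattracting if its multiplier is $0$. *)

(* Defs.v *)
From HB Require Import structures.
From mathcomp Require Import all_boot all_order all_algebra.
From mathcomp Require Import fraction complex.
From mathcomp Require Import reals.
Set Implicit Arguments. Unset Strict Implicit. Unset Printing Implicit Defensive.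
Import Order.TTheory GRing.Theory Num.Theory.
Local Open Scope ring_scope.

Section Newton.
Variable F : fieldType.

(* Relaxed Newton map N_{h,p}(z) = z - h p(z)/p'(z), written as the quotient
   (z p'(z) - h p(z)) / p'(z) of two polynomials. *)
Definition newton_num (h : F) (p : {poly F}) : {poly F} := 'X * p^`() - h *: p.
Definition newton_den (p : {poly F}) : {poly F} := p^`().

Definition newton_rnum h p := newton_num h p %/ gcdp (newton_num h p) (newton_den p).
Definition newton_rden h p := newton_den p %/ gcdp (newton_num h p) (newton_den p).

Definition newton_frac (h : F) (p : {poly F}) : {fraction {poly F}} :=
  let tf := @FracField.tofrac {poly F} in
  tf 'X - tf (h%:P * p) / tf (p^`()).

Definition multiplier (h : F) (p : {poly F}) (a : F) : F :=
  let n := newton_rnum h p in let d := newton_rden h p in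
  ((n^`()).[a] * d.[a] - n.[a] * (d^`()).[a]) / (d.[a] ^+ 2).

Definition superattracting (h : F) (p : {poly F}) (a : F) : Prop :=
  multiplier h p a = 0.

(* The finite fixed points of N_{h,p} are the roots of p. *)
Definition all_finite_fixed_superattracting (h : F) (p : {poly F}) : Prop :=
  forall a, root p a -> superattracting h p a.

Definition simple_roots (q : {poly F}) : Prop :=
  forall a, root q a -> mup a q = 1%N.

End Newton.

(* Main.v *)
Require Import Defs.
From HB Require Import structures.
From mathcomp Require Import all_boot all_order all_algebra.
From mathcomp Require Import fraction complex.
From mathcomp Require Import reals.
From mathcomp Require Import ring lra.
Import Order.TTheory GRing.Theory Num.Theory.
Local Open Scope ring_scope.
Local Notation "x %:F" := (@FracField.tofrac _ x).

Lemma mup0 (F : fieldType) (a : F) : mup a 0 = 0%N.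
Proof. rewrite /mup; match goal with |- nat_of_ord ?x = _ => case: x => -[|n]// end; by rewrite size_poly0. Qed.

Lemma key (F : numFieldType) (h : F) (p : {poly F}) (a : F) :
  p != 0 -> root p a ->
  (0 < mup a p)%N /\ multiplier h p a = 1 - h / (mup a p)%:R.
Proof.
move=> p0 ra.
have [k [u nua Ep]] := multiplicity_XsubC p a.
rewrite p0 /= in nua.
have u0 : u != 0 by apply: contraNneq nua => ->; rewrite root0.
have Hk : mup a p = k.
  by rewrite Ep mupMr // mup_XsubCX eqxx.
rewrite Hk.
case: k Hk Ep => [|k] Hk Ep.
  by move: ra; rewrite Ep expr0 mulr1 (negbTE nua).
split => //.
have [Xa EXa] : {Xa | Xa = 'X - a%:P} by eexists.
have [w Ew] : {w | w = u *+ k.+1 + Xa * u^`()} by eexists.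
have [M EM] : {M | M = 'X * w - h *: (Xa * u)} by eexists.
have Ed : p^`() = Xa ^+ k * w.
  rewrite Ep derivM deriv_exp Ew EXa derivXsubC /= mul1r mulrDr exprS.
  rewrite mulrnAr; ring.
have En : newton_num h p = Xa ^+ k * M.
  by rewrite /newton_num Ed Ep EM Ew EXa exprS; rewrite -!mul_polyC; ring.
have wa : w.[a] = u.[a] *+ k.+1.
  by rewrite Ew EXa !hornerE subrr mul0r addr0 hornerMn.
have wa0 : w.[a] != 0.
  by rewrite wa mulrn_eq0 negb_or /=.
have w0 : w != 0 by apply: contra_neq wa0 => ->; rewrite horner0.
have Xk0 : Xa ^+ k != 0 by rewrite expf_neq0 // EXa polyXsubC_eq0.
have den0 : newton_den p != 0 by rewrite /newton_den Ed mulf_neq0.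
rewrite /multiplier /newton_rnum /newton_rden.
set g := gcdp _ _.
set n := newton_num h p %/ g.
set d := newton_den p %/ g.
have g0 : g != 0 by rewrite gcdp_eq0 negb_and den0 orbT.
have Hn : n * g = newton_num h p by rewrite divpK // dvdp_gcdl.
have Hd : d * g = newton_den p by rewrite divpK // dvdp_gcdr.
have cop : coprimep n d by apply: coprimep_div_gcd; rewrite den0 orbT.
have E : n * w = M * d.
  apply: (mulfI Xk0); apply: (mulIf g0).
  transitivity (newton_num h p * newton_den p); first by rewrite -Hn /newton_den Ed; ring.
  by rewrite En -Hd; ring.
have Ea := congr1 (horner^~ a) E; rewrite /= !hornerE in Ea.
have Ma : M.[a] = a * w.[a].
  rewrite EM EXa !hornerE subrr /=; ring.
have da0 : d.[a] != 0.
  apply/negP => /eqP da.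
  have : root n a.
    by apply/eqP; move: Ea; rewrite da mulr0 => /eqP; rewrite mulf_eq0 (negbTE wa0) orbF => /eqP.
  by move/(coprimep_root cop); rewrite da eqxx.
have na : n.[a] = a * d.[a].
  by apply: (mulIf wa0); rewrite Ea Ma; ring.
have E' := congr1 (fun q => (q^`()).[a]) E; rewrite /= !derivM !hornerE in E'.
have M'a : (M^`()).[a] = w.[a] + a * (w^`()).[a] - h * u.[a].
  rewrite EM EXa derivB derivM derivX derivZ derivM derivXsubC.
  rewrite !hornerE subrr /=; ring.
rewrite M'a Ma na in E'.
have n'a : (n^`()).[a] = d.[a] * (1 - h * u.[a] / w.[a]) + a * (d^`()).[a].
  apply: (mulIf wa0).
  transitivity ((w.[a] + a * w^`().[a] - h * u.[a]) * d.[a] + a * w.[a] * d^`().[a] - a * d.[a] * w^`().[a]).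
    by rewrite -E'; ring.
  by field.
rewrite n'a wa.
have k0 : (k.+1)%:R != 0 :> F by rewrite pnatr_eq0.
have ua : u.[a] != 0 by [].
rewrite na -mulr_natr /=; field. by rewrite addrC natr1 k0 da0 ua.
Qed.


Lemma aux (K : fieldType) (A B C N : K) : B != 0 -> N != 0 -> C != 0 ->
  N * (A * B) / (C * B * N) = A / C.
Proof. by move=> hB hN hC; field; rewrite hB hN hC. Qed.

Lemma nf_pow (F : numFieldType) (q : {poly F}) (m : nat) :
  q ^+ m.+1 != 0 -> newton_frac (m.+1)%:R (q ^+ m.+1) = newton_frac 1 q.
Proof.
move=> p0.
rewrite /newton_frac deriv_exp exprS /= polyC_natr mul1r.
congr (_ - _).
have tM : forall x y : {poly F}, (x*y)%:F = x%:F * y%:F by move=> x y; exact: tofracM.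
have tMn : forall (x : {poly F}) n, (x*+n)%:F = x%:F *+ n by move=> x n; exact: tofracMn.
rewrite (tM (m.+1%:R) (q * q ^+ m)) (tM q (q^+m)) (tMn (q^`()*q^+m) m.+1) (tM q^`() (q^+m)).
have [->|dq0'] := eqVneq (q^`())%:F 0; first by rewrite !mul0r mul0rn !invr0 !mulr0.
have qm0 : (q ^+ m)%:F != 0.
  rewrite tofrac_eq0 expf_neq0 //; apply: contra_neq p0 => ->.
  by rewrite exprS mul0r.
have n0 : (m.+1%:R : {fraction {poly F}}) != 0.
  by rewrite -(rmorph_nat (@FracField.tofrac {poly F})) tofrac_eq0 -polyC_natr polyC_eq0 pnatr_eq0.
rewrite (rmorph_nat (@FracField.tofrac {poly F}) m.+1).
rewrite -[X in _ / X]mulr_natr.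
by rewrite (@aux _ (q%:F) _ _ _ qm0 n0 dq0').
Qed.

Theorem mainTheorem7 (R : realType) (p : {poly R[i]}) (h : R[i]) :
  (exists a b : R[i], [/\ a != b, root p a & root p b]) ->
  h != 0 ->
  all_finite_fixed_superattracting h p ->
  (forall a b : R[i], root p a -> root p b -> mup a p = mup b p) /\
  (forall (m : nat) (q : {poly R[i]}),
      (forall a : R[i], root p a -> mup a p = m) ->
      simple_roots q -> p = q ^+ m ->
      newton_frac h p = newton_frac 1 q).
Proof.
move=> [a0 [b0 [_ ra0 _]]] h0 sup.
have hk : forall a, p != 0 -> root p a -> (0 < mup a p)%N /\ h = (mup a p)%:R.
  move=> a p0 ra; have [k0 K] := @key _ h p a p0 ra; split => //.
  have := sup a ra; rewrite /superattracting K => /eqP; rewrite subr_eq0 => /eqP E.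
  have nz : (mup a p)%:R != 0 :> R[i] by rewrite pnatr_eq0 -lt0n.
  by apply: (mulIf (invr_neq0 nz)); rewrite -E mulfV.
split.
  move=> a b ra rb; have [->|p0] := eqVneq p 0; first by rewrite !mup0.
  have [_ Ea] := hk a p0 ra; have [_ Eb] := hk b p0 rb.
  by apply/eqP; rewrite -(eqr_nat R[i]) -Ea -Eb.
move=> m q Hm _ Ep.
have [p0|p0] := eqVneq p 0.
  have q0 : q = 0.
    by move: p0; rewrite Ep => /eqP; rewrite expf_eq0 => /andP[_ /eqP].
  by rewrite p0 q0 /newton_frac !deriv0 !mulr0 !tofrac0 !mul0r.
have [m0 Eh] := hk a0 p0 ra0; rewrite Hm // in m0 Eh.
case: m m0 Hm Ep Eh => // m _ Hm Ep Eh.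
rewrite Ep Eh; apply: nf_pow; by rewrite -Ep.
Qed.
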